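(* Let $A, B, P$ be points in the Euclidean plane and $r>0$ a number with $|AP|>r$ and $|BP|>r$. Consider the maximum angle problem: find a point $P^*$ with $|PP^*|=r$ maximizing the angle $\angle AP^*B\in[0,\pi]$. This problem can be solved using a quadratic equation; that is, a maximizing point $P^*$ exists and its coordinates can be obtained from the coordinates of $A$, $B$, $P$ and from $r$ by finitely many field operations and square roots.
   Context: Here $\angle AQB\in[0,\pi]$ denotes the non-reflex angle at $Q$ between rays $QA$ and $QB$. *)

(* Defs.v *)
From Stdlib Require Import Reals.
Open Scope R_scope.

Definition point := (R * R)%type.

Definition edist (X Y : point) : R :=
  sqrt ((fst X - fst Y) ^ 2 + (snd X - snd Y) ^ 2).

(* Non-reflex angle AQB in [0, PI], between rays QA and QB
   (meaningful when Q <> A and Q <> B). *)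
Definition angle (A Q B : point) : R :=
  acos (((fst A - fst Q) * (fst B - fst Q) + (snd A - snd Q) * (snd B - snd Q))
        / (edist Q A * edist Q B)).

Inductive constructible (S : R -> Prop) : R -> Prop :=
| cst_base : forall x, S x -> constructible S x
| cst_0 : constructible S 0
| cst_1 : constructible S 1
| cst_add : forall x y, constructible S x -> constructible S y -> constructible S (x + y)
| cst_opp : forall x, constructible S x -> constructible S (- x)
| cst_mul : forall x y, constructible S x -> constructible S y -> constructible S (x * y)
| cst_inv : forall x, constructible S x -> x <> 0 -> constructible S (/ x)
| cst_sqrt : forall x, constructible S x -> 0 <= x -> constructible S (sqrt x).

(* Main.v *)
Require Import Defs.
From Stdlib Require Import Reals Lra Psatz.
From Coquelicot Require Import Coquelicot.
Open Scope R_scope.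

Definition dd a1 a2 b1 b2 q1 q2 := (a1-q1)*(b1-q1)+(a2-q2)*(b2-q2).
Definition ww a1 a2 b1 b2 q1 q2 := (a1-q1)*(b2-q2)-(a2-q2)*(b1-q1).

Lemma tangency a1 a2 b1 b2 r p1 p2 :
  p1^2+p2^2 = r^2 ->
  ww a1 a2 b1 b2 p1 p2 <> 0 ->
  (forall q1 q2, q1^2+q2^2 = r^2 ->
     dd a1 a2 b1 b2 q1 q2 * Rabs (ww a1 a2 b1 b2 p1 p2) >=
     dd a1 a2 b1 b2 p1 p2 * Rabs (ww a1 a2 b1 b2 q1 q2)) ->
  let ds := dd a1 a2 b1 b2 p1 p2 in let ws := ww a1 a2 b1 b2 p1 p2 in
  let G1 := ws*(a1+b1) - ds*(b2-a2) in let G2 := ws*(a2+b2) - ds*(a1-b1) in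
  p1*G2 - p2*G1 = 0.
Proof.
  intros Hp Hws H ds ws G1 G2.
  destruct (Req_dec (p1*G2 - p2*G1) 0) as [|Hc]; [assumption|exfalso].
  set (c1 := p1*G2 - p2*G1) in *.
  set (r2 := p1^2+p2^2).
  set (E0 := r2 + a1*b1+a2*b2). set (m := a1*b2-a2*b1).
  set (X := ws*E0 - ds*m).
  set (c2 := p1*(a1-b1) - p2*(b2-a2)).
  set (Y := c1^2*ws*(2*m - ws)).
  set (M := 1 + Rabs (ws*X) + Rabs Y + Rabs (2*c1*c2)).
  assert (HM : 1 <= M) by (unfold M; pose proof (Rabs_pos (ws*X)); pose proof (Rabs_pos Y); pose proof (Rabs_pos (2*c1*c2)); lra).
  set (h := / M).
  assert (Hh0 : 0 < h) by (unfold h; apply Rinv_0_lt_compat; lra).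
  assert (HhM : h * M = 1) by (unfold h; field; lra).
  set (t := c1*ws*h).
  set (q1 := ((1-t^2)*p1 - 2*t*p2)/(1+t^2)).
  set (q2 := ((1-t^2)*p2 + 2*t*p1)/(1+t^2)).
  assert (Ht : 1+t^2 > 0) by nra.
  assert (HK : (1+t^2) * (ws*(dd a1 a2 b1 b2 q1 q2 * ws - ds * ww a1 a2 b1 b2 q1 q2)) = 2*t*ws*(t*X - c1)).
  { unfold q1,q2,c1,X,G1,G2,m,E0,r2,ws,ds,dd,ww. field. lra. }
  assert (HW : (1+t^2) * (ws * ww a1 a2 b1 b2 q1 q2) = ws^2 + t^2 * ws*(2*m - ws) - 2*t*ws*c2).
  { unfold q1,q2,c2,m,ws,ww. field. lra. }
  assert (HC : q1^2+q2^2 = r^2).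
  { rewrite <- Hp. unfold q1,q2. field. lra. }
  assert (Hws2 : ws^2 > 0) by (assert (ws*ws>0) by (destruct (Rtotal_order ws 0) as [|[|]]; [nra|exfalso;auto|nra]); nra).
  assert (B1 : h * Rabs (ws*X) < 1).
  { assert (h*Rabs(ws*X) <= h*(M-1)) by (apply Rmult_le_compat_l; [lra|]; unfold M; pose proof (Rabs_pos Y); pose proof (Rabs_pos (2*c1*c2)); lra). nra. }
  assert (B2 : h * (Rabs Y + Rabs (2*c1*c2)) < 1).
  { assert (h*(Rabs Y + Rabs (2*c1*c2)) <= h*(M-1)) by (apply Rmult_le_compat_l; [lra|]; unfold M; pose proof (Rabs_pos (ws*X)); lra). nra. }
  assert (Hh1 : h <= 1) by nra.
  assert (Wpos : ws * ww a1 a2 b1 b2 q1 q2 > 0).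
  { assert (E : ws^2 + t^2 * ws*(2*m - ws) - 2*t*ws*c2 = ws^2 * (1 + h^2*Y - h*(2*c1*c2))).
    { unfold t, Y. ring. }
    assert (1 + h^2*Y - h*(2*c1*c2) > 0).
    { pose proof (Rle_abs (-Y)). rewrite Rabs_Ropp in H0. pose proof (Rle_abs (2*c1*c2)).
      pose proof (Rabs_pos Y).
      assert (h^2 * Rabs Y <= h * Rabs Y) by (replace (h^2) with (h*h) by ring; assert (0 <= h*Rabs Y) by (apply Rmult_le_pos; lra); nra).
      assert (h^2 * Y >= - (h^2 * Rabs Y)) by nra.
      assert (h*(2*c1*c2) <= h*Rabs (2*c1*c2)) by nra. nra. }
    assert (0 < (1+t^2) * (ws * ww a1 a2 b1 b2 q1 q2)) by (rewrite HW, E; nra). nra. }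
  assert (Kpos : ws*(dd a1 a2 b1 b2 q1 q2 * ws - ds * ww a1 a2 b1 b2 q1 q2) >= 0).
  { pose proof (H q1 q2 HC) as Hq. fold ws ds in Hq.
    destruct (Rlt_dec 0 ws).
    - assert (ww a1 a2 b1 b2 q1 q2 > 0) by nra.
      rewrite (Rabs_right ws) in Hq by lra. rewrite (Rabs_right (ww _ _ _ _ q1 q2)) in Hq by lra. nra.
    - assert (ws < 0) by (destruct (Rtotal_order ws 0) as [|[|]]; [lra|exfalso; auto|lra]).
      assert (ww a1 a2 b1 b2 q1 q2 < 0) by nra.
      rewrite (Rabs_left ws) in Hq by lra. rewrite (Rabs_left (ww _ _ _ _ q1 q2)) in Hq by lra. nra. }
  assert (Kneg : 2*t*ws*(t*X - c1) < 0).
  { assert (E : 2*t*ws*(t*X - c1) = 2*c1^2*ws^2*h*(h*(ws*X) - 1)) by (unfold t; ring).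
    rewrite E. pose proof (Rle_abs (ws*X)).
    assert (h*(ws*X) < 1) by nra.
    assert (c1^2 > 0) by (assert (c1*c1>0) by (destruct (Rtotal_order c1 0) as [|[|]]; [nra|exfalso;auto|nra]); nra).
    assert (2*c1^2*ws^2*h > 0) by (apply Rmult_lt_0_compat; [apply Rmult_lt_0_compat;[apply Rmult_lt_0_compat|]|]; lra).
    nra. }
  nra.
Qed.
Lemma sq_pos x : x <> 0 -> x^2 > 0.
Proof. intro H; pose proof (Rsqr_pos_lt x H); unfold Rsqr in *; nra. Qed.

Section Cn.
Variable S : R -> Prop.
Notation Cn := (constructible S).
Lemma cn_sub x y : Cn x -> Cn y -> Cn (x - y).
Proof. intros; unfold Rminus; apply cst_add; auto; apply cst_opp; auto. Qed.
Lemma cn_div x y : Cn x -> Cn y -> y <> 0 -> Cn (x / y).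
Proof. intros; unfold Rdiv; apply cst_mul; auto; apply cst_inv; auto. Qed.
Lemma cn_pow x n : Cn x -> Cn (x ^ n).
Proof. intros; induction n; simpl; [apply cst_1| apply cst_mul; auto]. Qed.
Lemma cn_2 : Cn 2.
Proof. replace 2 with (1+1) by ring; apply cst_add; apply cst_1. Qed.
Lemma cn_sq x y : Cn y -> x^2 = y -> Cn x.
Proof.
  intros Hy Hx.
  assert (Hs : sqrt y = Rabs x) by (rewrite <- Hx; rewrite <- sqrt_Rsqr_abs; f_equal; unfold Rsqr; ring).
  assert (Hc : Cn (sqrt y)) by (apply cst_sqrt; auto; rewrite <- Hx; nra).
  destruct (Rle_dec 0 x).
  - rewrite Rabs_right in Hs by lra. rewrite <- Hs; auto.
  - rewrite Rabs_left in Hs by lra. replace x with (- sqrt y) by lra. apply cst_opp; auto.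
Qed.
End Cn.

Ltac cn := repeat match goal with
 | |- constructible _ _ => assumption
 | |- constructible _ (_ + _) => apply cst_add
 | |- constructible _ (_ - _) => apply cn_sub
 | |- constructible _ (- _) => apply cst_opp
 | |- constructible _ (_ * _) => apply cst_mul
 | |- constructible _ (_ / _) => apply cn_div
 | |- constructible _ (_ ^ _) => apply cn_pow
 | |- constructible _ 0 => apply cst_0
 | |- constructible _ 1 => apply cst_1
 | |- constructible _ 2 => apply cn_2
end.


Lemma line_case S a1 a2 b1 b2 r p1 p2 :
  constructible S a1 -> constructible S a2 -> constructible S b1 -> constructible S b2 -> constructible S r ->
  p1^2+p2^2 = r^2 -> ww a1 a2 b1 b2 p1 p2 = 0 -> (a1 <> b1 \/ a2 <> b2) ->
  constructible S p1 /\ constructible S p2.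
Proof.
  intros ca1 ca2 cb1 cb2 cr Hp Hw Hab.
  set (e1 := b1 - a1). set (e2 := b2 - a2).
  set (E2 := e1^2+e2^2).
  assert (HE : E2 > 0).
  { unfold E2, e1, e2. destruct Hab as [H|H].
    - assert (b1 - a1 <> 0) by (intro; apply H; lra). pose proof (sq_pos _ H0). pose proof (pow2_ge_0 (b2-a2)); lra.
    - assert (b2 - a2 <> 0) by (intro; apply H; lra). pose proof (sq_pos _ H0). pose proof (pow2_ge_0 (b1-a1)); lra. }
  set (tau := (p1-a1)*e1+(p2-a2)*e2).
  assert (Hc : (a1-p1)*e2 - (a2-p2)*e1 = 0) by (rewrite <- Hw; unfold ww, e1, e2; ring).
  assert (H1 : E2*(p1-a1) = tau*e1).
  { assert (E2*(p1-a1) - tau*e1 = -e2*((a1-p1)*e2 - (a2-p2)*e1)) by (unfold E2,tau; ring). rewrite Hc in H. lra. }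
  assert (H2 : E2*(p2-a2) = tau*e2).
  { assert (E2*(p2-a2) - tau*e2 = e1*((a1-p1)*e2 - (a2-p2)*e1)) by (unfold E2,tau; ring). rewrite Hc in H. lra. }
  set (ae := a1*e1+a2*e2).
  assert (Htau : (tau + ae)^2 = ae^2 - E2*(a1^2+a2^2 - r^2)).
  { assert (E2*((tau + ae)^2 - (ae^2 - E2*(a1^2+a2^2 - r^2))) = 0).
    { replace (E2*((tau + ae)^2 - (ae^2 - E2*(a1^2+a2^2 - r^2))))
        with ((E2*a1 + tau*e1)^2 + (E2*a2+tau*e2)^2 - E2^2*r^2) by (unfold ae, E2; ring).
      replace (E2*a1 + tau*e1) with (E2*p1) by lra.
      replace (E2*a2 + tau*e2) with (E2*p2) by lra.
      rewrite <- Hp. ring. }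
    apply Rmult_integral in H. destruct H; lra. }
  assert (Ct : constructible S tau).
  { assert (constructible S (tau + ae)) by (apply (cn_sq S _ (ae^2 - E2*(a1^2+a2^2 - r^2))); [unfold ae, E2, e1, e2; cn|exact Htau]).
    replace tau with ((tau+ae) - ae) by ring. unfold ae, e1, e2 in *; cn. }
  split.
  - replace p1 with (a1 + tau*e1/E2) by (field_simplify_eq; lra || (unfold E2; lra)).
    unfold E2, e1, e2 in *; cn; lra.
  - replace p2 with (a2 + tau*e2/E2) by (field_simplify_eq; lra || (unfold E2; lra)).
    unfold E2, e1, e2 in *; cn; lra.
Qed.


Lemma tangent_case S a1 a2 b1 b2 r p1 p2 :
  constructible S a1 -> constructible S a2 -> constructible S b1 -> constructible S b2 -> constructible S r ->
  0 < r -> p1^2+p2^2 = r^2 -> a1^2+a2^2 <> r^2 ->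
  ww a1 a2 b1 b2 p1 p2 <> 0 ->
  let ds := dd a1 a2 b1 b2 p1 p2 in let ws := ww a1 a2 b1 b2 p1 p2 in
  let G1 := ws*(a1+b1) - ds*(b2-a2) in let G2 := ws*(a2+b2) - ds*(a1-b1) in
  p1*G2 - p2*G1 = 0 ->
  constructible S p1 /\ constructible S p2.
Proof.
  intros ca1 ca2 cb1 cb2 cr Hr Hp Ha Hws ds ws G1 G2 Hc.
  assert (HG : G1^2+G2^2 > 0).
  { assert (Id : ws*(a1^2+a2^2 - (p1^2+p2^2)) = a1*G1 + a2*G2 - p1*G1 - p2*G2)
      by (unfold G1, G2, ws, ds, ww, dd; ring).
    rewrite Hp in Id.
    destruct (Req_dec G1 0) as [e1|n1].
    - destruct (Req_dec G2 0) as [e2|n2].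
      + exfalso. rewrite e1, e2 in Id. assert (ws*(a1^2+a2^2-r^2) = 0) by lra.
        apply Rmult_integral in H. destruct H as [H|H]; [auto|apply Ha; lra].
      + pose proof (sq_pos _ n2). pose proof (pow2_ge_0 G1). lra.
    - pose proof (sq_pos _ n1). pose proof (pow2_ge_0 G2). lra. }
  set (E0 := r^2 + a1*b1 + a2*b2). set (m := a1*b2 - a2*b1).
  set (s1 := a1+b1). set (s2 := a2+b2). set (n1 := b2-a2). set (n2 := a1-b1).
  assert (HpG : p1*G1+p2*G2 = ws*E0 - ds*m).
  { unfold G1, G2, ws, ds, ww, dd, E0, m. rewrite <- Hp. ring. }
  destruct (Req_dec (a1^2+a2^2) (b1^2+b2^2)) as [Hab|Hab].
  - (* symmetric case: p parallel to n *)
    assert (Hn : n1^2+n2^2 > 0).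
    { destruct (Req_dec n1 0) as [e1|f1].
      - destruct (Req_dec n2 0) as [e2|f2].
        + exfalso; apply Hws. unfold ws, ww. unfold n1, n2 in *.
          replace b1 with a1 by lra. replace b2 with a2 by lra. ring.
        + pose proof (sq_pos _ f2). pose proof (pow2_ge_0 n1). lra.
      - pose proof (sq_pos _ f1). pose proof (pow2_ge_0 n2). lra. }
    assert (HGn : G1*n2 - G2*n1 = 0).
    { replace (G1*n2 - G2*n1) with (ws*((a1^2+a2^2) - (b1^2+b2^2))) by (unfold G1,G2,n1,n2; ring).
      rewrite Hab; ring. }
    assert (Hpn : p1*n2 - p2*n1 = 0).
    { assert ((p1*n2 - p2*n1)*(G1^2+G2^2) = 0).
      { replace ((p1*n2 - p2*n1)*(G1^2+G2^2)) with
          ((p1*G1+p2*G2)*(G1*n2 - G2*n1) + (p1*G2 - p2*G1)*(G1*n1 + G2*n2)) by ring.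
        rewrite HGn, Hc. ring. }
      apply Rmult_integral in H. destruct H; lra. }
    set (g := p1*n1+p2*n2).
    assert (Hg : g^2 = r^2*(n1^2+n2^2)).
    { rewrite <- Hp. replace (g^2) with ((p1^2+p2^2)*(n1^2+n2^2) - (p1*n2 - p2*n1)^2) by (unfold g; ring).
      rewrite Hpn. ring. }
    assert (Cg : constructible S g) by (apply (cn_sq S _ (r^2*(n1^2+n2^2))); [unfold n1,n2; cn | exact Hg]).
    split.
    + replace p1 with (g*n1/(n1^2+n2^2)).
      * unfold n1, n2 in *; cn. lra.
      * assert (E : g*n1 = p1*(n1^2+n2^2)) by (transitivity (p1*(n1^2+n2^2) - n2*(p1*n2-p2*n1)); [unfold g; ring| rewrite Hpn; ring]).
        rewrite E. field. lra.
    + replace p2 with (g*n2/(n1^2+n2^2)).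
      * unfold n1, n2 in *; cn. lra.
      * assert (E : g*n2 = p2*(n1^2+n2^2)) by (transitivity (p2*(n1^2+n2^2) + n1*(p1*n2-p2*n1)); [unfold g; ring| rewrite Hpn; ring]).
        rewrite E. field. lra.
  - set (det := s1*n2 - s2*n1).
    assert (Hdet : det <> 0).
    { unfold det, s1, s2, n1, n2. intro H. apply Hab. lra. }
    set (x1 := (E0*n2 - m*s2)/det). set (x2 := (s1*m - n1*E0)/det).
    assert (HxG : x1*G1 + x2*G2 = ws*E0 - ds*m).
    { unfold x1, x2, G1, G2. fold s1 s2 n1 n2. field_simplify_eq; [|exact Hdet].
      unfold det. ring. }
    assert (Hpx : (p1*x1+p2*x2)*(G1^2+G2^2) = r^2*(G1^2+G2^2)).
    { replace ((p1*x1+p2*x2)*(G1^2+G2^2)) with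
        ((p1*G1+p2*G2)*(x1*G1+x2*G2) + (p1*G2 - p2*G1)*(x1*G2 - x2*G1)) by ring.
      rewrite Hc, HxG, <- HpG, <- Hp.
      replace ((p1^2+p2^2)*(G1^2+G2^2)) with ((p1*G1+p2*G2)^2 + (p1*G2-p2*G1)^2) by ring.
      rewrite Hc. ring. }
    assert (Hpx' : p1*x1+p2*x2 = r^2) by (apply (Rmult_eq_reg_r (G1^2+G2^2)); [exact Hpx| lra]).
    assert (Hx : x1^2+x2^2 > 0).
    { destruct (Req_dec x1 0) as [e1|f1].
      - destruct (Req_dec x2 0) as [e2|f2].
        + exfalso. rewrite e1, e2 in Hpx'. nra.
        + pose proof (sq_pos _ f2). pose proof (pow2_ge_0 x1). lra.
      - pose proof (sq_pos _ f1). pose proof (pow2_ge_0 x2). lra. }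
    assert (Cx1 : constructible S x1) by (unfold x1, det, E0, m, s1, s2, n1, n2 in *; cn; exact Hdet).
    assert (Cx2 : constructible S x2) by (unfold x2, det, E0, m, s1, s2, n1, n2 in *; cn; exact Hdet).
    set (be := p2*x1 - p1*x2).
    assert (Hbe : be^2 = r^2*(x1^2+x2^2) - r^2*r^2).
    { rewrite <- Hpx' at 2 3. rewrite <- Hp. unfold be. ring. }
    assert (Cb : constructible S be) by (apply (cn_sq S _ (r^2*(x1^2+x2^2) - r^2*r^2)); [cn | exact Hbe]).
    split.
    + replace p1 with ((r^2*x1 - be*x2)/(x1^2+x2^2)).
      * cn. lra.
      * assert (E : r^2*x1 - be*x2 = p1*(x1^2+x2^2)) by (rewrite <- Hpx'; unfold be; ring).
        rewrite E. field. lra.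
    + replace p2 with ((r^2*x2 + be*x1)/(x1^2+x2^2)).
      * cn. lra.
      * assert (E : r^2*x2 + be*x1 = p2*(x1^2+x2^2)) by (rewrite <- Hpx'; unfold be; ring).
        rewrite E. field. lra.
Qed.
Definition ratio a1 a2 b1 b2 q1 q2 := dd a1 a2 b1 b2 q1 q2 / (sqrt((q1-a1)^2+(q2-a2)^2) * sqrt((q1-b1)^2+(q2-b2)^2)).
Lemma cont a1 a2 b1 b2 r t :
  0 < (r*cos t - a1)^2 + (r*sin t - a2)^2 -> 0 < (r*cos t - b1)^2 + (r*sin t - b2)^2 ->
  continuity_pt (fun t => - ratio a1 a2 b1 b2 (r*cos t) (r*sin t)) t.
Proof.
  intros H1 H2.
  apply continuity_pt_filterlim.
  assert (HD : ex_derive (fun t => - ratio a1 a2 b1 b2 (r*cos t) (r*sin t)) t).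
  { unfold ratio, dd. auto_derive. repeat split; auto.
    apply Rgt_not_eq, Rmult_lt_0_compat; apply sqrt_lt_R0; nra. }
  apply ex_derive_continuous in HD. exact HD.
Qed.

Lemma acos_antitone x y : -1 <= x -> x <= y -> y <= 1 -> acos y <= acos x.
Proof.
  intros H1 H2 H3.
  destruct (Rle_dec (acos y) (acos x)) as [|Hn]; auto. exfalso.
  pose proof (acos_bound x). pose proof (acos_bound y).
  assert (Hc : cos (acos y) < cos (acos x)) by (apply cos_decreasing_1; lra).
  rewrite !cos_acos in Hc by lra. lra.
Qed.

Lemma ratio_eq a1 a2 b1 b2 q1 q2 :
  0 < (q1-a1)^2+(q2-a2)^2 -> 0 < (q1-b1)^2+(q2-b2)^2 ->
  ratio a1 a2 b1 b2 q1 q2 =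
  dd a1 a2 b1 b2 q1 q2 / sqrt ((dd a1 a2 b1 b2 q1 q2)^2 + (ww a1 a2 b1 b2 q1 q2)^2).
Proof.
  intros H1 H2. unfold ratio. rewrite <- sqrt_mult_alt by lra.
  f_equal. f_equal. unfold dd, ww. ring.
Qed.

Lemma ratio_bound d w : 0 < d^2 + w^2 -> -1 <= d / sqrt (d^2+w^2) <= 1.
Proof.
  intro H. pose proof (sqrt_lt_R0 _ H) as HN.
  pose proof (sqrt_sqrt (d^2+w^2) ltac:(lra)) as HS.
  set (N := sqrt (d^2+w^2)) in *.
  assert (Rabs d <= N).
  { apply Rsqr_incr_0_var; [|lra]. rewrite <- Rsqr_abs. unfold Rsqr. nra. }
  pose proof (Rle_abs d). pose proof (Rle_abs (-d)). rewrite Rabs_Ropp in H2.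
  split.
  - apply (Rmult_le_reg_r N); [lra|]. unfold Rdiv. rewrite Rmult_assoc, Rinv_l by lra. lra.
  - apply (Rmult_le_reg_r N); [lra|]. unfold Rdiv. rewrite Rmult_assoc, Rinv_l by lra. lra.
Qed.

Lemma unit_cmp x y xs ys : x^2+y^2 = 1 -> xs^2+ys^2 = 1 -> 0 <= y -> 0 <= ys -> xs <= x ->
  xs*y <= x*ys.
Proof.
  intros H1 H2 H3 H4 H5.
  destruct (Rle_dec xs 0); destruct (Rle_dec 0 x).
  - nra.
  - assert (x^2 <= xs^2) by nra. assert (ys <= y) by nra. nra.
  - assert (xs^2 <= x^2) by nra. assert (y <= ys) by nra. nra.
  - lra.
Qed.

Lemma key3 d w ds ws : 0 < d^2 + w^2 -> ws <> 0 ->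
  d / sqrt (d^2+w^2) >= ds / sqrt (ds^2+ws^2) -> d * Rabs ws >= ds * Rabs w.
Proof.
  intros H Hws Hr.
  assert (Hs : 0 < ds^2 + ws^2) by (pose proof (sq_pos _ Hws); pose proof (pow2_ge_0 ds); lra).
  pose proof (sqrt_lt_R0 _ H) as HN. pose proof (sqrt_lt_R0 _ Hs) as HNs.
  pose proof (sqrt_sqrt (d^2+w^2) ltac:(lra)) as HS.
  pose proof (sqrt_sqrt (ds^2+ws^2) ltac:(lra)) as HSs.
  set (N := sqrt (d^2+w^2)) in *. set (Ns := sqrt (ds^2+ws^2)) in *.
  assert (Aw : Rabs w ^2 = w^2) by (destruct (Rle_dec 0 w); [rewrite Rabs_pos_eq by lra| rewrite Rabs_left by lra]; ring).
  assert (Aws : Rabs ws ^2 = ws^2) by (destruct (Rle_dec 0 ws); [rewrite Rabs_pos_eq by lra| rewrite Rabs_left by lra]; ring).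
  pose proof (unit_cmp (d/N) (Rabs w/N) (ds/Ns) (Rabs ws/Ns)) as U.
  assert (E1 : (d/N)^2 + (Rabs w/N)^2 = 1) by (field_simplify; [rewrite Aw, <- HS; field|]; lra).
  assert (E2 : (ds/Ns)^2 + (Rabs ws/Ns)^2 = 1) by (field_simplify; [rewrite Aws, <- HSs; field|]; lra).
  assert (0 <= Rabs w / N) by (apply Rdiv_le_0_compat; [apply Rabs_pos|lra]).
  assert (0 <= Rabs ws / Ns) by (apply Rdiv_le_0_compat; [apply Rabs_pos|lra]).
  specialize (U E1 E2 H0 H1 ltac:(lra)).
  assert (E : ds * Rabs w = (ds/Ns * (Rabs w/N)) * (N*Ns)) by (field; lra).
  assert (E' : d * Rabs ws = (d/N * (Rabs ws/Ns)) * (N*Ns)) by (field; lra).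
  rewrite E, E'. apply Rle_ge, Rmult_le_compat_r; [nra|exact U].
Qed.

Lemma polar r q1 q2 : 0 < r -> q1^2+q2^2 = r^2 ->
  exists t, 0 <= t <= 2*PI /\ q1 = r*cos t /\ q2 = r*sin t.
Proof.
  intros Hr Hq.
  set (x := q1/r).
  assert (Hx : -1 <= x <= 1).
  { assert (x^2 <= 1) by (unfold x; replace ((q1/r)^2) with (q1^2/r^2) by (field; lra);
      apply (Rmult_le_reg_r (r^2)); [nra|]; field_simplify; nra || lra).
    nra. }
  pose proof (acos_bound x) as Hb. pose proof PI_RGT_0.
  pose proof (cos_acos x Hx) as Hc. pose proof (sin_acos x Hx) as Hs.
  assert (Hsq : 1 - x² = Rsqr (q2/r)).
  { unfold Rsqr, x. replace 1 with ((q1^2+q2^2)/r^2) by (rewrite Hq; field; lra). field. lra. }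
  rewrite Hsq, sqrt_Rsqr_abs in Hs.
  destruct (Rle_dec 0 q2).
  - exists (acos x). split; [lra|]. split.
    + rewrite Hc. unfold x; field; lra.
    + rewrite Hs, Rabs_pos_eq by (apply Rdiv_le_0_compat; lra). field; lra.
  - exists (2*PI - acos x). split; [lra|]. split.
    + rewrite cos_minus, cos_2PI, sin_2PI, Hc. unfold x; field; lra.
    + rewrite sin_minus, cos_2PI, sin_2PI, Hs, Rabs_left.
      * field; lra.
      * unfold Rdiv. apply Rmult_neg_pos; [lra| apply Rinv_0_lt_compat; lra].
Qed.

Lemma dist_pos r q1 q2 a1 a2 : q1^2+q2^2 = r^2 -> a1^2+a2^2 > r^2 -> 0 < (q1-a1)^2+(q2-a2)^2.
Proof.
  intros H1 H2. destruct (Req_dec q1 a1).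
  - destruct (Req_dec q2 a2).
    + subst. lra.
    + assert (q2 - a2 <> 0) by (intro; apply H0; lra). pose proof (sq_pos _ H3). pose proof (pow2_ge_0 (q1-a1)). lra.
  - assert (q1 - a1 <> 0) by (intro; apply H; lra). pose proof (sq_pos _ H0). pose proof (pow2_ge_0 (q2-a2)). lra.
Qed.

Lemma evt a1 a2 b1 b2 r : 0 < r -> a1^2+a2^2 > r^2 -> b1^2+b2^2 > r^2 ->
  exists p1 p2, p1^2+p2^2 = r^2 /\
  forall q1 q2, q1^2+q2^2 = r^2 -> ratio a1 a2 b1 b2 p1 p2 <= ratio a1 a2 b1 b2 q1 q2.
Proof.
  intros Hr Ha Hb.
  assert (Hon : forall t, (r*cos t)^2 + (r*sin t)^2 = r^2).
  { intro t. pose proof (sin2_cos2 t). unfold Rsqr in H. nra. }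
  pose proof PI_RGT_0.
  destruct (continuity_ab_maj (fun t => - ratio a1 a2 b1 b2 (r*cos t) (r*sin t)) 0 (2*PI))
    as [M [HM HMb]]; [lra| |].
  { intros c _. apply cont; [apply (dist_pos r)|apply (dist_pos r)]; auto. }
  exists (r*cos M), (r*sin M). split; [apply Hon|].
  intros q1 q2 Hq. destruct (polar r q1 q2 Hr Hq) as [t [Ht [-> ->]]].
  specialize (HM t Ht). simpl in HM. lra.
Qed.

Lemma angle_eq (A Q B P : point) : angle A Q B =
  acos (ratio (fst A - fst P) (snd A - snd P) (fst B - fst P) (snd B - snd P) (fst Q - fst P) (snd Q - snd P)).
Proof.
  unfold angle, ratio, dd, edist. f_equal. f_equal; [ring|].
  f_equal; f_equal; ring.
Qed.

Lemma sqrt_gt_sq X r : 0 < r -> sqrt X > r -> X > r^2.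
Proof.
  intros Hr H. destruct (Rlt_dec (r^2) X) as [|Hn]; [lra|exfalso].
  assert (sqrt X <= sqrt (r^2)) by (apply sqrt_le_1_alt; lra).
  rewrite sqrt_pow2 in H0 by lra. lra.
Qed.

Lemma on_circle (P Q : point) r : 0 < r ->
  (edist P Q = r <-> (fst Q - fst P)^2 + (snd Q - snd P)^2 = r^2).
Proof.
  intros Hr. unfold edist.
  replace ((fst P - fst Q)^2 + (snd P - snd Q)^2) with ((fst Q - fst P)^2 + (snd Q - snd P)^2) by ring.
  split.
  - intro H. rewrite <- H. rewrite pow2_sqrt; [reflexivity|]. apply Rplus_le_le_0_compat; apply pow2_ge_0.
  - intro H. rewrite H. apply sqrt_pow2. lra.
Qed.

Lemma lagrange a1 a2 b1 b2 q1 q2 :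
  (dd a1 a2 b1 b2 q1 q2)^2 + (ww a1 a2 b1 b2 q1 q2)^2 =
  ((q1-a1)^2+(q2-a2)^2)*((q1-b1)^2+(q2-b2)^2).
Proof. unfold dd, ww. ring. Qed.

Theorem proposition2 (A B P : point) (r : R) :
  0 < r -> edist A P > r -> edist B P > r ->
  exists Ps : point,
    edist P Ps = r /\
    (forall Q : point, edist P Q = r -> angle A Q B <= angle A Ps B) /\
    constructible
      (fun x => x = fst A \/ x = snd A \/ x = fst B \/ x = snd B \/
                x = fst P \/ x = snd P \/ x = r) (fst Ps) /\
    constructible
      (fun x => x = fst A \/ x = snd A \/ x = fst B \/ x = snd B \/
                x = fst P \/ x = snd P \/ x = r) (snd Ps).
Proof.
  intros Hr HA HB.
  set (S := fun x => x = fst A \/ x = snd A \/ x = fst B \/ x = snd B \/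
                x = fst P \/ x = snd P \/ x = r).
  assert (cA1 : constructible S (fst A)) by (apply cst_base; unfold S; tauto).
  assert (cA2 : constructible S (snd A)) by (apply cst_base; unfold S; tauto).
  assert (cB1 : constructible S (fst B)) by (apply cst_base; unfold S; tauto).
  assert (cB2 : constructible S (snd B)) by (apply cst_base; unfold S; tauto).
  assert (cP1 : constructible S (fst P)) by (apply cst_base; unfold S; tauto).
  assert (cP2 : constructible S (snd P)) by (apply cst_base; unfold S; tauto).
  assert (cr : constructible S r) by (apply cst_base; unfold S; tauto).
  set (a1 := fst A - fst P). set (a2 := snd A - snd P).
  set (b1 := fst B - fst P). set (b2 := snd B - snd P).
  assert (ca1 : constructible S a1) by (apply cn_sub; auto).
  assert (ca2 : constructible S a2) by (apply cn_sub; auto).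
  assert (cb1 : constructible S b1) by (apply cn_sub; auto).
  assert (cb2 : constructible S b2) by (apply cn_sub; auto).
  assert (Ha : a1^2+a2^2 > r^2) by (apply (sqrt_gt_sq _ r Hr); exact HA).
  assert (Hb : b1^2+b2^2 > r^2) by (apply (sqrt_gt_sq _ r Hr); exact HB).
  assert (Hang : forall Q : point, angle A Q B = acos (ratio a1 a2 b1 b2 (fst Q - fst P) (snd Q - snd P)))
    by (intro Q; apply angle_eq).
  destruct (evt a1 a2 b1 b2 r Hr Ha Hb) as [p1 [p2 [Hp Hmin]]].
  assert (Hbound : forall q1 q2, q1^2+q2^2 = r^2 -> -1 <= ratio a1 a2 b1 b2 q1 q2 <= 1).
  { intros q1 q2 Hq. pose proof (dist_pos r q1 q2 a1 a2 Hq Ha). pose proof (dist_pos r q1 q2 b1 b2 Hq Hb).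
    rewrite ratio_eq by auto. apply ratio_bound. rewrite lagrange. nra. }
  assert (Hcase : (a1 = b1 /\ a2 = b2) \/ (a1 <> b1 \/ a2 <> b2)) by
    (destruct (Req_dec a1 b1); destruct (Req_dec a2 b2); tauto).
  destruct Hcase as [[e1 e2]|Hab].
  - (* A = B relative: all angles are 0 *)
    exists (fst P + r, snd P). split; [|split; [|split]].
    + apply on_circle; auto. simpl. ring.
    + intros Q HQ. apply on_circle in HQ; auto.
      rewrite (Hang Q).
      set (q1 := fst Q - fst P) in *. set (q2 := snd Q - snd P) in *.
      pose proof (dist_pos r q1 q2 a1 a2 HQ Ha).
      pose proof (dist_pos r q1 q2 b1 b2 HQ Hb).
      rewrite ratio_eq by auto.
      assert (Hw : ww a1 a2 b1 b2 q1 q2 = 0) by (unfold ww; rewrite <- e1, <- e2; ring).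
      assert (Hd : dd a1 a2 b1 b2 q1 q2 = (q1-a1)^2+(q2-a2)^2) by (unfold dd; rewrite <- e1, <- e2; ring).
      rewrite Hw, Hd. replace (((q1 - a1) ^ 2 + (q2 - a2) ^ 2) ^ 2 + 0 ^ 2) with
        (((q1 - a1) ^ 2 + (q2 - a2) ^ 2) ^ 2) by ring.
      rewrite sqrt_pow2 by lra. replace (((q1 - a1) ^ 2 + (q2 - a2) ^ 2) / ((q1 - a1) ^ 2 + (q2 - a2) ^ 2)) with 1 by (field; lra).
      rewrite acos_1. apply acos_bound.
    + simpl. apply cst_add; auto.
    + simpl. auto.
  - assert (Cp : constructible S p1 /\ constructible S p2).
    { destruct (Req_dec (ww a1 a2 b1 b2 p1 p2) 0) as [Hw|Hw].
      - apply (line_case S a1 a2 b1 b2 r); auto.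
      - assert (Hne : a1^2+a2^2 <> r^2) by (intro; lra).
        apply (tangent_case S a1 a2 b1 b2 r p1 p2 ca1 ca2 cb1 cb2 cr Hr Hp Hne Hw).
        apply (tangency a1 a2 b1 b2 r p1 p2 Hp Hw).
        intros q1 q2 Hq.
        pose proof (dist_pos r q1 q2 a1 a2 Hq Ha). pose proof (dist_pos r q1 q2 b1 b2 Hq Hb).
        pose proof (dist_pos r p1 p2 a1 a2 Hp Ha). pose proof (dist_pos r p1 p2 b1 b2 Hp Hb).
        apply key3; [rewrite lagrange; nra | exact Hw |].
        pose proof (Hmin q1 q2 Hq) as Hm. rewrite !ratio_eq in Hm by auto. lra. }
    destruct Cp as [Cp1 Cp2].
    exists (fst P + p1, snd P + p2). split; [|split; [|split]].
    + apply on_circle; auto. cbn [fst snd]. rewrite <- Hp. ring.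
    + intros Q HQ. apply on_circle in HQ; auto.
      rewrite (Hang Q), (Hang (fst P + p1, snd P + p2)). cbn [fst snd].
      replace (fst P + p1 - fst P) with p1 by ring. replace (snd P + p2 - snd P) with p2 by ring.
      pose proof (Hbound _ _ HQ). pose proof (Hbound _ _ Hp).
      pose proof (Hmin _ _ HQ).
      apply acos_antitone; lra.
    + simpl. apply cst_add; auto.
    + simpl. apply cst_add; auto.
Qed.
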